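(* Let $L>0$, $N\in\mathbb{N}_+$, $h=L/N$, $\epsilon>0$, $\theta_0>0$, $\tau>0$, $A\ge0$, $\alpha\in(0,1)$, $\rho_u>0$, $\rho_w>0$, and let $u^n,u^{n-1}\in\mathcal{C}_{per}$ with $-1<u^n<1$ and $-1<u^{n-1}<1$ pointwise. Let $u^{n+1}\in\mathcal{C}_{per}$ (with $-1<u^{n+1}<1$ pointwise) be the solution of the second-order convex splitting scheme, i.e. together with some $w^{n+1}\in\mathcal{C}_{per}$, $$3u^{n+1}-4u^n+u^{n-1}=2\tau\Delta_hw^{n+1},$$ $$w^{n+1}=\log(1+u^{n+1})-\log(1-u^{n+1})-\theta_0(2u^n-u^{n-1})-\epsilon^2\Delta_hu^{n+1}-A\tau\theta_0^2\Delta_h(u^{n+1}-u^n).$$ Let $\{u_2^{(k)}\}$ be the sequence generated by Algorithm 2 (described in the context). Then $\lim_{k\to\infty}\|u_2^{(k)}-u^{n+1}\|_2=0$.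
   Context: $\mathcal{C}_{per}$ is the space of real grid functions $\nu=(\nu_{i,j,k})_{i,j,k\in\mathbb{Z}}$ that are $N$-periodic in each index (values at cell centres of a uniform grid of mesh size $h$ on $(0,L)^3$). Inner product $\langle\nu,\xi\rangle=h^2\sum_{i,j,k=1}^N\nu_{i,j,k}\xi_{i,j,k}$, $\|\nu\|_2=\langle\nu,\nu\rangle^{1/2}$. Discrete Laplacian $(\Delta_h\nu)_{i,j,k}=h^{-2}(\nu_{i+1,j,k}+\nu_{i-1,j,k}+\nu_{i,j+1,k}+\nu_{i,j-1,k}+\nu_{i,j,k+1}+\nu_{i,j,k-1}-6\nu_{i,j,k})$. Operations and inequalities are pointwise. The solution $(u^{n+1},w^{n+1})$ of the scheme exists and is unique. Algorithm 2: set $u_2^{(0)}=u^n$, $w_2^{(0)}=0$, $u_3^{(0)}=0$, $w_3^{(0)}=0$. For $k=0,1,2,\dots$: (i) find $u_1^{(k+1)},w_1^{(k+1)}\in\mathcal{C}_{per}$ solving $(-\epsilon^2-A\tau\theta_0^2)\Delta_hu_1^{(k+1)}+A\tau\theta_0^2\Delta_hu^n-\alpha w_1^{(k+1)}+u_3^{(k)}+\rho_u(u_1^{(k+1)}-u_2^{(k)})=0$ and $\alpha(-u_1^{(k+1)}+\frac43u^n-\frac13u^{n-1})+\frac{2\tau}{3}\Delta_hw_1^{(k+1)}-w_3^{(k)}-\rho_w(w_1^{(k+1)}-w_2^{(k)})=0$; (ii) find $u_2^{(k+1)},w_2^{(k+1)}\in\mathcal{C}_{per}$ with $-1<u_2^{(k+1)}<1$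 solving $\log(1+u_2^{(k+1)})-\log(1-u_2^{(k+1)})-\theta_0(2u^n-u^{n-1})-(1-\alpha)w_2^{(k+1)}-u_3^{(k)}-\rho_u(u_1^{(k+1)}-u_2^{(k+1)})=0$ and $(1-\alpha)(-u_2^{(k+1)}+\frac43u^n-\frac13u^{n-1})+w_3^{(k)}+\rho_w(w_1^{(k+1)}-w_2^{(k+1)})=0$; (iii) set $u_3^{(k+1)}=u_3^{(k)}+\rho_u(u_1^{(k+1)}-u_2^{(k+1)})$, $w_3^{(k+1)}=w_3^{(k)}+\rho_w(w_1^{(k+1)}-w_2^{(k+1)})$. *)

(* Defs.v *)
From Stdlib Require Import Reals ZArith Lra.
From Coquelicot Require Import Coquelicot.
Open Scope R_scope.

(* Real grid functions indexed by Z^3 (cell centres). *)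
Definition grid := Z -> Z -> Z -> R.

Definition periodic (N : nat) (v : grid) : Prop :=
  forall i j k : Z,
    v (i + Z.of_nat N)%Z j k = v i j k /\
    v i (j + Z.of_nat N)%Z k = v i j k /\
    v i j (k + Z.of_nat N)%Z = v i j k.

Definition lap (h : R) (v : grid) : grid := fun i j k =>
  / (h ^ 2) * (v (i + 1)%Z j k + v (i - 1)%Z j k + v i (j + 1)%Z k
              + v i (j - 1)%Z k + v i j (k + 1)%Z + v i j (k - 1)%Z
              - 6 * v i j k).

(* Sum over i = 1..N of f i  (sum_f_R0 g (N-1) = g 0 + ... + g (N-1)). *)
Definition sum1N (N : nat) (f : Z -> R) : R :=
  sum_f_R0 (fun a => f (Z.of_nat (a + 1))) (N - 1).

Definition ip (N : nat) (h : R) (nu xi : grid) : R :=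
  h ^ 2 * sum1N N (fun i => sum1N N (fun j => sum1N N (fun k =>
            nu i j k * xi i j k))).

Definition norm2 (N : nat) (h : R) (nu : grid) : R := sqrt (ip N h nu nu).

(* Main.v *)
Require Import Defs.
From Stdlib Require Import Reals ZArith Lra Lia.
From Coquelicot Require Import Coquelicot.
Open Scope R_scope.
Lemma ln_le_xm1 z : 0 < z -> ln z <= z - 1.
Proof.
  intros Hz. rewrite <- (ln_exp (z - 1)). apply ln_le; auto.
  generalize (exp_ineq1_le (z-1)); lra.
Qed.

Lemma ln_diff_ge x y : 0 < x -> 0 < y -> (x - y) / x <= ln x - ln y.
Proof.
  intros Hx Hy.
  assert (H := ln_le_xm1 (y / x) ltac:(apply Rdiv_lt_0_compat; lra)).
  unfold Rdiv in H. rewrite ln_mult in H by (try apply Rinv_0_lt_compat; lra).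
  rewrite ln_Rinv in H by lra.
  replace ((x - y) / x) with (- (y * / x - 1)) by (field; lra). lra.
Qed.

Definition phi (x : R) := ln (1 + x) - ln (1 - x).

Lemma phi_ge a b : -1 < a < 1 -> -1 < b < 1 -> b <= a -> a - b <= phi a - phi b.
Proof.
  intros Ha Hb Hab. unfold phi.
  assert (H1 := ln_diff_ge (1 + a) (1 + b) ltac:(lra) ltac:(lra)).
  assert (H2 := ln_diff_ge (1 - b) (1 - a) ltac:(lra) ltac:(lra)).
  assert ((a - b) / 2 <= (1 + a - (1 + b)) / (1 + a)).
  { unfold Rdiv. replace (1 + a - (1 + b)) with (a - b) by ring.
    apply Rmult_le_compat_l; [lra|]. apply Rinv_le_contravar; lra. }
  assert ((a - b) / 2 <= (1 - b - (1 - a)) / (1 - b)).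
  { unfold Rdiv. replace (1 - b - (1 - a)) with (a - b) by ring.
    apply Rmult_le_compat_l; [lra|]. apply Rinv_le_contravar; lra. }
  lra.
Qed.

Lemma phi_mono a b : -1 < a < 1 -> -1 < b < 1 -> (a - b) * (a - b) <= (phi a - phi b) * (a - b).
Proof.
  intros Ha Hb. destruct (Rle_dec b a).
  - assert (H := phi_ge a b Ha Hb r). apply Rmult_le_compat_r; lra.
  - assert (H := phi_ge b a Hb Ha ltac:(lra)).
    replace ((a - b) * (a - b)) with ((b - a) * (b - a)) by ring.
    replace ((phi a - phi b) * (a - b)) with ((phi b - phi a) * (b - a)) by ring.
    apply Rmult_le_compat_r; lra.
Qed.

Lemma key (al ru rw U1 W1 K1 K2 U2 W2 U2o W2o Y Z Yp Zp P2 Po : R) :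
  0 < ru -> 0 < rw ->
  - K1 - al * W1 + Y + ru * (U1 - U2o) = 0 ->
  - al * U1 + K2 - Z - rw * (W1 - W2o) = 0 ->
  Yp = Y + ru * (U1 - U2) -> Zp = Z + rw * (W1 - W2) ->
  Yp = P2 - (1 - al) * W2 -> Zp = (1 - al) * U2 ->
  Y = Po - (1 - al) * W2o -> Z = (1 - al) * U2o ->
  U2 * U2 <= P2 * U2 -> 0 <= (P2 - Po) * (U2 - U2o) ->
  Yp * Yp / (2 * ru) + Zp * Zp / (2 * rw) + ru * (U2 * U2) / 2 + rw * (W2 * W2) / 2 + U2 * U2
  <= Y * Y / (2 * ru) + Z * Z / (2 * rw) + ru * (U2o * U2o) / 2 + rw * (W2o * W2o) / 2
     + U1 * K1 + W1 * K2.
Proof.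
  intros Hru Hrw Ha Hb HYp HZp HcY HcZ HoY HoZ M1 M2.
  assert (EU1 : U1 = U2 + (Yp - Y) / ru) by (rewrite HYp; field; lra).
  assert (EW1 : W1 = W2 + (Zp - Z) / rw) by (rewrite HZp; field; lra).
  assert (EK1 : K1 = - al * W1 + Y + ru * (U1 - U2o)) by lra.
  assert (EK2 : K2 = al * U1 + Z + rw * (W1 - W2o)) by lra.
  rewrite EK1, EK2. clear EK1 EK2 Ha Hb HYp HZp.
  rewrite EW1, EU1. clear EU1 EW1. 
  assert (Hsq1 : 0 <= (Yp - Y) * (Yp - Y) / (2 * ru)).
  { apply Rmult_le_pos; [apply (Rle_0_sqr (_ - _))| apply Rlt_le, Rinv_0_lt_compat; lra]. }
  assert (Hsq2 : 0 <= (Zp - Z) * (Zp - Z) / (2 * rw)).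
  { apply Rmult_le_pos; [apply (Rle_0_sqr (_ - _))| apply Rlt_le, Rinv_0_lt_compat; lra]. }
  assert (Hsq3 : 0 <= ru * ((U2 - U2o) * (U2 - U2o)) / 2) by (generalize (Rle_0_sqr (U2 - U2o)); unfold Rsqr; intro; apply Rmult_le_pos; [apply Rmult_le_pos; lra|lra]).
  assert (Hsq4 : 0 <= rw * ((W2 - W2o) * (W2 - W2o)) / 2) by (generalize (Rle_0_sqr (W2 - W2o)); unfold Rsqr; intro; apply Rmult_le_pos; [apply Rmult_le_pos; lra|lra]).
  assert (E : Y * Y / (2 * ru) + Z * Z / (2 * rw) + ru * (U2o * U2o) / 2 + rw * (W2o * W2o) / 2 +
   (U2 + (Yp - Y) / ru) * (- al * (W2 + (Zp - Z) / rw) + Y + ru * (U2 + (Yp - Y) / ru - U2o)) +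
   (W2 + (Zp - Z) / rw) * (al * (U2 + (Yp - Y) / ru) + Z + rw * (W2 + (Zp - Z) / rw - W2o))
   - (Yp * Yp / (2 * ru) + Zp * Zp / (2 * rw) + ru * (U2 * U2) / 2 + rw * (W2 * W2) / 2 + U2 * U2)
   = (P2 * U2 - U2 * U2) + (P2 - Po) * (U2 - U2o) + (Yp - Y) * (Yp - Y) / (2 * ru)
     + (Zp - Z) * (Zp - Z) / (2 * rw) + ru * ((U2 - U2o) * (U2 - U2o)) / 2
     + rw * ((W2 - W2o) * (W2 - W2o)) / 2).
  { rewrite HcY, HcZ, HoY, HoZ. field. split; lra. }
  lra.
Qed.

Lemma tele (g : nat -> R) n :
  sum_f_R0 (fun a => g (S a)) n = sum_f_R0 g n - g 0%nat + g (S n).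
Proof. induction n; simpl; [ring| rewrite IHn; ring]. Qed.

Lemma sum1N_ext N f g : (forall i, f i = g i) -> sum1N N f = sum1N N g.
Proof. intros H; unfold sum1N; apply sum_eq; intros; apply H. Qed.

Lemma sum1N_le N f g : (forall i, f i <= g i) -> sum1N N f <= sum1N N g.
Proof. intros H; unfold sum1N; apply sum_Rle; intros; apply H. Qed.

Lemma sum1N_add N f g F : (forall i, F i = f i + g i) -> sum1N N F = sum1N N f + sum1N N g.
Proof. intros H; unfold sum1N; rewrite <- sum_plus; apply sum_eq; intros; apply H. Qed.

Lemma sum1N_scal N c f F : (forall i, F i = c * f i) -> sum1N N F = c * sum1N N f.
Proof. intros H; unfold sum1N; rewrite scal_sum; apply sum_eq; intros; rewrite H; ring. Qed.

Lemma sum1N_shift N f : (0 < N)%nat -> (forall i, f (i + Z.of_nat N)%Z = f i) ->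
  sum1N N (fun i => f (i + 1)%Z) = sum1N N f.
Proof.
  intros HN Hp. unfold sum1N.
  set (g := fun a => f (Z.of_nat (a + 1))).
  transitivity (sum_f_R0 (fun a => g (S a)) (N - 1)).
  { apply sum_eq; intros; unfold g; f_equal; lia. }
  rewrite tele. unfold g.
  replace (Z.of_nat (S (N - 1) + 1)) with (1 + Z.of_nat N)%Z by lia.
  rewrite Hp. replace (Z.of_nat (0 + 1)) with 1%Z by lia. ring.
Qed.

Lemma sum1N_shiftm N f : (0 < N)%nat -> (forall i, f (i + Z.of_nat N)%Z = f i) ->
  sum1N N (fun i => f (i - 1)%Z) = sum1N N f.
Proof.
  intros HN Hp.
  rewrite <- (sum1N_shift N (fun i => f (i - 1)%Z)); auto.
  - apply sum1N_ext; intros; f_equal; lia.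
  - intros i; replace (i + Z.of_nat N - 1)%Z with (i - 1 + Z.of_nat N)%Z by lia; apply Hp.
Qed.

Definition S3 N (f : grid) := sum1N N (fun i => sum1N N (fun j => sum1N N (fun k => f i j k))).

Lemma S3_ext N f g : (forall i j k, f i j k = g i j k) -> S3 N f = S3 N g.
Proof. intros H; unfold S3; repeat (apply sum1N_ext; intros); apply H. Qed.

Lemma S3_le N f g : (forall i j k, f i j k <= g i j k) -> S3 N f <= S3 N g.
Proof. intros H; unfold S3; repeat (apply sum1N_le; intros); apply H. Qed.

Lemma S3_add N f g F : (forall i j k, F i j k = f i j k + g i j k) -> S3 N F = S3 N f + S3 N g.
Proof.
  intros H; unfold S3. apply sum1N_add; intros i.
  apply sum1N_add; intros j. apply sum1N_add; intros k. apply H.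
Qed.

Lemma S3_add' N f g : S3 N (fun i j k => f i j k + g i j k) = S3 N f + S3 N g.
Proof. apply S3_add; reflexivity. Qed.

Lemma S3_scal N c f F : (forall i j k, F i j k = c * f i j k) -> S3 N F = c * S3 N f.
Proof.
  intros H; unfold S3. apply sum1N_scal; intros i.
  apply sum1N_scal; intros j. apply sum1N_scal; intros k. apply H.
Qed.

Lemma S3_nonneg N f : (forall i j k, 0 <= f i j k) -> 0 <= S3 N f.
Proof.
  intros H. replace 0 with (S3 N (fun _ _ _ => 0)).
  - apply S3_le; auto.
  - rewrite (S3_scal N 0 (fun _ _ _ => 0)); [ring| intros; ring].
Qed.

Definition per3 N (g : grid) := forall i j k,
    g (i + Z.of_nat N)%Z j k = g i j k /\
    g i (j + Z.of_nat N)%Z k = g i j k /\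
    g i j (k + Z.of_nat N)%Z = g i j k.

Lemma S3_shift N g : (0 < N)%nat -> per3 N g ->
  S3 N (fun i j k => g (i+1)%Z j k) = S3 N g /\
  S3 N (fun i j k => g (i-1)%Z j k) = S3 N g /\
  S3 N (fun i j k => g i (j+1)%Z k) = S3 N g /\
  S3 N (fun i j k => g i (j-1)%Z k) = S3 N g /\
  S3 N (fun i j k => g i j (k+1)%Z) = S3 N g /\
  S3 N (fun i j k => g i j (k-1)%Z) = S3 N g.
Proof.
  intros HN Hp. unfold S3.
  assert (P1 : forall i, (fun i => sum1N N (fun j => sum1N N (fun k => g i j k))) (i + Z.of_nat N)%Z
     = (fun i => sum1N N (fun j => sum1N N (fun k => g i j k))) i).
  { intros i; simpl. apply sum1N_ext; intros j; apply sum1N_ext; intros k; apply Hp. }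
  repeat split.
  - apply (sum1N_shift N _ HN P1).
  - apply (sum1N_shiftm N _ HN P1).
  - apply sum1N_ext; intros i.
    apply (sum1N_shift N (fun j => sum1N N (fun k => g i j k)) HN).
    intros j; apply sum1N_ext; intros k; apply Hp.
  - apply sum1N_ext; intros i.
    apply (sum1N_shiftm N (fun j => sum1N N (fun k => g i j k)) HN).
    intros j; apply sum1N_ext; intros k; apply Hp.
  - apply sum1N_ext; intros i; apply sum1N_ext; intros j.
    apply (sum1N_shift N (fun k => g i j k) HN). intros k; apply Hp.
  - apply sum1N_ext; intros i; apply sum1N_ext; intros j.
    apply (sum1N_shiftm N (fun k => g i j k) HN). intros k; apply Hp.
Qed.

Lemma S3_shift0 N g F G : (0 < N)%nat -> per3 N g -> (forall i j k, F i j k = G i j k - g i j k) ->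
  S3 N G = S3 N g -> S3 N F = 0.
Proof.
  intros HN Hp HF HG.
  rewrite (S3_add N G (fun i j k => (-1) * g i j k)).
  - rewrite (S3_scal N (-1) g (fun i j k => (-1) * g i j k)); [|intros; reflexivity]. rewrite HG; ring.
  - intros; rewrite HF; ring.
Qed.

Lemma S3_lap N h v : (0 < N)%nat -> h <> 0 -> per3 N v ->
  S3 N (fun i j k => v i j k * lap h v i j k) <= 0.
Proof.
  intros HN Hh Hp.
  set (q := fun i j k => v i j k * v i j k).
  assert (Hq : per3 N q).
  { intros i j k; unfold q; destruct (Hp i j k) as [A [B C]]; rewrite A, B, C; tauto. }
  destruct (S3_shift N q HN Hq) as [E1 [E2 [E3 [E4 [E5 E6]]]]].
  set (c := / (h ^ 2) / 2).
  assert (Hc : 0 <= c).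
  { unfold c. apply Rmult_le_pos; [|lra]. apply Rlt_le, Rinv_0_lt_compat.
    replace (h^2) with (h*h) by ring. apply (Rsqr_pos_lt h Hh). }
  apply Rle_trans with (S3 N (fun i j k => c * (
     (q (i+1)%Z j k - q i j k) + (q (i-1)%Z j k - q i j k) + (q i (j+1)%Z k - q i j k)
     + (q i (j-1)%Z k - q i j k) + (q i j (k+1)%Z - q i j k) + (q i j (k-1)%Z - q i j k)))).
  - apply S3_le; intros i j k. unfold lap, q, c.
    set (t := / h ^ 2). assert (Ht : 0 <= t).
    { unfold t. apply Rlt_le, Rinv_0_lt_compat. replace (h^2) with (h*h) by ring. apply (Rsqr_pos_lt h Hh). }
    cut (0 <= t / 2 * ((v (i+1)%Z j k - v i j k) * (v (i+1)%Z j k - v i j k)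
       + (v (i-1)%Z j k - v i j k) * (v (i-1)%Z j k - v i j k)
       + (v i (j+1)%Z k - v i j k) * (v i (j+1)%Z k - v i j k)
       + (v i (j-1)%Z k - v i j k) * (v i (j-1)%Z k - v i j k)
       + (v i j (k+1)%Z - v i j k) * (v i j (k+1)%Z - v i j k)
       + (v i j (k-1)%Z - v i j k) * (v i j (k-1)%Z - v i j k))).
    { intros H0. unfold t in *. lra. }
    apply Rmult_le_pos; [lra|].
    repeat apply Rplus_le_le_0_compat; apply Rle_0_sqr.
  - rewrite (S3_scal N c _ (fun i j k => c * (
     (q (i+1)%Z j k - q i j k) + (q (i-1)%Z j k - q i j k) + (q i (j+1)%Z k - q i j k)
     + (q i (j-1)%Z k - q i j k) + (q i j (k+1)%Z - q i j k) + (q i j (k-1)%Z - q i j k))))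
     by (intros; reflexivity).
    rewrite !S3_add'.
    rewrite (S3_shift0 N q _ _ HN Hq (fun i j k => eq_refl) E1).
    rewrite (S3_shift0 N q _ _ HN Hq (fun i j k => eq_refl) E2).
    rewrite (S3_shift0 N q _ _ HN Hq (fun i j k => eq_refl) E3).
    rewrite (S3_shift0 N q _ _ HN Hq (fun i j k => eq_refl) E4).
    rewrite (S3_shift0 N q _ _ HN Hq (fun i j k => eq_refl) E5).
    rewrite (S3_shift0 N q _ _ HN Hq (fun i j k => eq_refl) E6).
    lra.
Qed.
Lemma lim_aux (V E : nat -> R) : (forall p, 0 <= V p) -> (forall p, 0 <= E p) ->
  (forall p, V (S (S p)) + E (S (S p)) <= V (S p)) -> is_lim_seq E 0.
Proof.
  intros HV HE Hd.
  set (W := fun p => V (S p)).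
  assert (Hex : ex_finite_lim_seq W).
  { apply (ex_finite_lim_seq_decr W 0). intros n; unfold W; generalize (Hd n) (HE (S (S n))); lra.
    intros; apply HV. }
  destruct Hex as [l Hl].
  assert (Hl1 : is_lim_seq (fun n => W (S n)) l) by (apply (is_lim_seq_incr_1 W); auto).
  assert (Hd0 := is_lim_seq_minus' _ _ _ _ Hl Hl1).
  replace (l - l) with 0 in Hd0 by ring.
  assert (H2 : is_lim_seq (fun p => E (S (S p))) 0).
  { apply is_lim_seq_le_le with (u := fun _ => 0) (w := fun n => W n - W (S n)).
    - intros n; split; [apply HE|]. unfold W; generalize (Hd n); lra.
    - apply is_lim_seq_const.
    - exact Hd0. }
  apply (is_lim_seq_incr_n E 2).
  eapply is_lim_seq_ext; [|exact H2]. intros n; simpl; f_equal; lia.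
Qed.

Lemma lap_sub h f g i j k : lap h (fun a b c => f a b c - g a b c) i j k = lap h f i j k - lap h g i j k.
Proof. unfold lap; ring. Qed.

Theorem theorem4p6
  (L : R) (N : nat) (eps theta0 tau A alpha rho_u rho_w : R)
  (un unm1 unp1 wnp1 : grid)
  (u1 w1 u2 w2 u3 w3 : nat -> grid) :
  let h := L / INR N in
  0 < L -> (0 < N)%nat -> 0 < eps -> 0 < theta0 -> 0 < tau -> 0 <= A ->
  0 < alpha < 1 -> 0 < rho_u -> 0 < rho_w ->
  periodic N un -> periodic N unm1 -> periodic N unp1 -> periodic N wnp1 ->
  (forall i j k, -1 < un i j k < 1) ->
  (forall i j k, -1 < unm1 i j k < 1) ->
  (forall i j k, -1 < unp1 i j k < 1) ->
  (* the second-order convex splitting scheme *)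
  (forall i j k,
     3 * unp1 i j k - 4 * un i j k + unm1 i j k = 2 * tau * lap h wnp1 i j k) ->
  (forall i j k,
     wnp1 i j k = ln (1 + unp1 i j k) - ln (1 - unp1 i j k)
                  - theta0 * (2 * un i j k - unm1 i j k)
                  - eps ^ 2 * lap h unp1 i j k
                  - A * tau * theta0 ^ 2 * lap h (fun a b c => unp1 a b c - un a b c) i j k) ->
  (* Algorithm 2: all iterates lie in C_per *)
  (forall m, periodic N (u1 m) /\ periodic N (w1 m) /\ periodic N (u2 m) /\
             periodic N (w2 m) /\ periodic N (u3 m) /\ periodic N (w3 m)) ->
  (* initialization *)
  u2 0%nat = un -> w2 0%nat = (fun _ _ _ => 0) ->
  u3 0%nat = (fun _ _ _ => 0) -> w3 0%nat = (fun _ _ _ => 0) ->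
  (* step (i) *)
  (forall m i j k,
     (- eps ^ 2 - A * tau * theta0 ^ 2) * lap h (u1 (S m)) i j k
     + A * tau * theta0 ^ 2 * lap h un i j k
     - alpha * w1 (S m) i j k + u3 m i j k
     + rho_u * (u1 (S m) i j k - u2 m i j k) = 0) ->
  (forall m i j k,
     alpha * (- u1 (S m) i j k + 4 / 3 * un i j k - 1 / 3 * unm1 i j k)
     + 2 * tau / 3 * lap h (w1 (S m)) i j k
     - w3 m i j k - rho_w * (w1 (S m) i j k - w2 m i j k) = 0) ->
  (* step (ii) *)
  (forall m i j k, -1 < u2 (S m) i j k < 1) ->
  (forall m i j k,
     ln (1 + u2 (S m) i j k) - ln (1 - u2 (S m) i j k)
     - theta0 * (2 * un i j k - unm1 i j k)
     - (1 - alpha) * w2 (S m) i j k - u3 m i j k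
     - rho_u * (u1 (S m) i j k - u2 (S m) i j k) = 0) ->
  (forall m i j k,
     (1 - alpha) * (- u2 (S m) i j k + 4 / 3 * un i j k - 1 / 3 * unm1 i j k)
     + w3 m i j k + rho_w * (w1 (S m) i j k - w2 (S m) i j k) = 0) ->
  (* step (iii) *)
  (forall m i j k,
     u3 (S m) i j k = u3 m i j k + rho_u * (u1 (S m) i j k - u2 (S m) i j k)) ->
  (forall m i j k,
     w3 (S m) i j k = w3 m i j k + rho_w * (w1 (S m) i j k - w2 (S m) i j k)) ->
  is_lim_seq (fun m => norm2 N h (fun a b c => u2 m a b c - unp1 a b c)) 0.
Proof.
  intros h HL HN Heps Hth Htau HA Hal Hru Hrw Pun Punm1 Punp1 Pwnp1 Bun Bunm1 Bunp1
    Sch1 Sch2 Per I1 I2 I3 I4 Si1 Si2 Bu2 Sii1 Sii2 Siii1 Siii2.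
  assert (Hh : h <> 0).
  { unfold h. apply Rgt_not_eq. apply Rdiv_lt_0_compat; auto. apply lt_0_INR; lia. }
  set (kap := eps ^ 2 + A * tau * theta0 ^ 2).
  assert (Hkap : 0 <= kap).
  { unfold kap. assert (0 <= A * tau * theta0 ^ 2).
    { apply Rmult_le_pos; [apply Rmult_le_pos; lra|]. apply pow_le; lra. }
    assert (0 <= eps ^ 2) by (apply pow_le; lra). lra. }
  set (c0 := fun i j k => 4 / 3 * un i j k - 1 / 3 * unm1 i j k).
  set (ys := fun i j k => phi (unp1 i j k) - theta0 * (2 * un i j k - unm1 i j k)
                          - (1 - alpha) * wnp1 i j k).
  set (zs := fun i j k => (1 - alpha) * (unp1 i j k - c0 i j k)).
  set (Vd := fun m i j k =>
     (u3 m i j k - ys i j k) * (u3 m i j k - ys i j k) / (2 * rho_u)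
     + (w3 m i j k - zs i j k) * (w3 m i j k - zs i j k) / (2 * rho_w)
     + rho_u * ((u2 m i j k - unp1 i j k) * (u2 m i j k - unp1 i j k)) / 2
     + rho_w * ((w2 m i j k - wnp1 i j k) * (w2 m i j k - wnp1 i j k)) / 2).
  set (V := fun m => S3 N (Vd m)).
  set (E := fun m => S3 N (fun i j k => (u2 m i j k - unp1 i j k) * (u2 m i j k - unp1 i j k))).
  assert (u3f : forall p i j k, u3 (S p) i j k =
     phi (u2 (S p) i j k) - theta0 * (2 * un i j k - unm1 i j k) - (1 - alpha) * w2 (S p) i j k).
  { intros p i j k. rewrite Siii1. generalize (Sii1 p i j k). unfold phi. lra. }
  assert (w3f : forall p i j k, w3 (S p) i j k = (1 - alpha) * (u2 (S p) i j k - c0 i j k)).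
  { intros p i j k. rewrite Siii2. generalize (Sii2 p i j k). unfold c0. lra. }
  assert (Hpt : forall p i j k,
     Vd (S (S p)) i j k + (u2 (S (S p)) i j k - unp1 i j k) * (u2 (S (S p)) i j k - unp1 i j k)
     <= Vd (S p) i j k
        + kap * ((u1 (S (S p)) i j k - unp1 i j k) * lap h (fun a b c => u1 (S (S p)) a b c - unp1 a b c) i j k)
        + 2 * tau / 3 * ((w1 (S (S p)) i j k - wnp1 i j k) * lap h (fun a b c => w1 (S (S p)) a b c - wnp1 a b c) i j k)).
  { intros p i j k.
    assert (K := key alpha rho_u rho_w
      (u1 (S (S p)) i j k - unp1 i j k) (w1 (S (S p)) i j k - wnp1 i j k)
      (kap * lap h (fun a b c => u1 (S (S p)) a b c - unp1 a b c) i j k)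
      (2 * tau / 3 * lap h (fun a b c => w1 (S (S p)) a b c - wnp1 a b c) i j k)
      (u2 (S (S p)) i j k - unp1 i j k) (w2 (S (S p)) i j k - wnp1 i j k)
      (u2 (S p) i j k - unp1 i j k) (w2 (S p) i j k - wnp1 i j k)
      (u3 (S p) i j k - ys i j k) (w3 (S p) i j k - zs i j k)
      (u3 (S (S p)) i j k - ys i j k) (w3 (S (S p)) i j k - zs i j k)
      (phi (u2 (S (S p)) i j k) - phi (unp1 i j k)) (phi (u2 (S p) i j k) - phi (unp1 i j k))
      Hru Hrw).
    rewrite !lap_sub in K.
    assert (Ew := Sch2 i j k). rewrite lap_sub in Ew.
    assert (Es := Sch1 i j k).
    assert (Ea := Si1 (S p) i j k). assert (Eb := Si2 (S p) i j k).
    assert (M1 := phi_mono (u2 (S (S p)) i j k) (unp1 i j k) (Bu2 _ i j k) (Bunp1 i j k)).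
    assert (M2 := phi_mono (u2 (S (S p)) i j k) (u2 (S p) i j k) (Bu2 _ i j k) (Bu2 _ i j k)).
    assert (M2' : 0 <= (phi (u2 (S (S p)) i j k) - phi (u2 (S p) i j k)) * (u2 (S (S p)) i j k - u2 (S p) i j k)).
    { eapply Rle_trans; [|exact M2]. apply Rle_0_sqr. }
    rewrite !lap_sub.
    unfold Vd. 
    refine (Rle_trans _ _ _ _ (Rle_trans _ _ _ (K _ _ _ _ _ _ _ _ _ _) _)).
    - lra.
    - unfold ys, kap, phi in *. lra.
    - unfold zs, c0 in *. lra.
    - rewrite Siii1; ring.
    - rewrite Siii2; ring.
    - rewrite u3f; unfold ys; ring.
    - rewrite w3f; unfold zs; ring.
    - rewrite u3f; unfold ys; ring.
    - rewrite w3f; unfold zs; ring.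
    - lra.
    - replace ((phi (u2 (S (S p)) i j k) - phi (unp1 i j k) - (phi (u2 (S p) i j k) - phi (unp1 i j k))) *
        (u2 (S (S p)) i j k - unp1 i j k - (u2 (S p) i j k - unp1 i j k))) with
        ((phi (u2 (S (S p)) i j k) - phi (u2 (S p) i j k)) * (u2 (S (S p)) i j k - u2 (S p) i j k)) by ring.
      exact M2'.
    - lra. }
  assert (Pdiff : forall f g : grid, periodic N f -> periodic N g ->
     per3 N (fun a b c => f a b c - g a b c)).
  { intros f g Pf Pg i j k. destruct (Pf i j k) as [A1 [A2 A3]]. destruct (Pg i j k) as [B1 [B2 B3]].
    rewrite A1, A2, A3, B1, B2, B3. tauto. }
  assert (HV : forall p, V (S (S p)) + E (S (S p)) <= V (S p)).
  { intros p. unfold V, E.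
    rewrite <- (S3_add N (Vd (S (S p))) (fun i j k => (u2 (S (S p)) i j k - unp1 i j k) * (u2 (S (S p)) i j k - unp1 i j k))
       (fun i j k => Vd (S (S p)) i j k + (u2 (S (S p)) i j k - unp1 i j k) * (u2 (S (S p)) i j k - unp1 i j k)))
       by (intros; reflexivity).
    eapply Rle_trans; [apply S3_le; exact (Hpt p)|].
    set (D := fun a b c => u1 (S (S p)) a b c - unp1 a b c).
    set (G := fun a b c => w1 (S (S p)) a b c - wnp1 a b c).
    rewrite (S3_add N (fun i j k => Vd (S p) i j k + kap * (D i j k * lap h D i j k))
                      (fun i j k => 2 * tau / 3 * (G i j k * lap h G i j k))) by (intros; reflexivity).
    rewrite (S3_add N (Vd (S p)) (fun i j k => kap * (D i j k * lap h D i j k))) by (intros; reflexivity).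
    rewrite (S3_scal N kap (fun i j k => D i j k * lap h D i j k) (fun i j k => kap * (D i j k * lap h D i j k))) by (intros; reflexivity).
    rewrite (S3_scal N (2 * tau / 3) (fun i j k => G i j k * lap h G i j k) (fun i j k => 2 * tau / 3 * (G i j k * lap h G i j k))) by (intros; reflexivity).
    assert (L1 := S3_lap N h D HN Hh (Pdiff _ _ (proj1 (Per _)) Punp1)).
    assert (L2 := S3_lap N h G HN Hh (Pdiff _ _ (proj1 (proj2 (Per _))) Pwnp1)).
    assert (kap * S3 N (fun i j k => D i j k * lap h D i j k) <= 0).
    { replace 0 with (kap * 0) by ring. apply Rmult_le_compat_l; auto. }
    assert (2 * tau / 3 * S3 N (fun i j k => G i j k * lap h G i j k) <= 0).
    { replace 0 with (2 * tau / 3 * 0) by ring. apply Rmult_le_compat_l; [lra|auto]. }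
    lra. }
  assert (Hsq : forall x, 0 <= x * x) by (intros; apply Rle_0_sqr).
  assert (HV0 : forall p, 0 <= V p).
  { intros p. apply S3_nonneg. intros i j k. unfold Vd.
    assert (0 <= / (2 * rho_u)) by (apply Rlt_le, Rinv_0_lt_compat; lra).
    assert (0 <= / (2 * rho_w)) by (apply Rlt_le, Rinv_0_lt_compat; lra).
    unfold Rdiv.
    repeat apply Rplus_le_le_0_compat.
    - apply Rmult_le_pos; auto.
    - apply Rmult_le_pos; auto.
    - apply Rmult_le_pos; [apply Rmult_le_pos; auto; lra| lra].
    - apply Rmult_le_pos; [apply Rmult_le_pos; auto; lra| lra]. }
  assert (HE0 : forall p, 0 <= E p) by (intros; apply S3_nonneg; intros; apply Hsq).
  assert (HL0 := lim_aux V E HV0 HE0 HV).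
  assert (HL1 : is_lim_seq (fun m => h ^ 2 * E m) 0).
  { replace (Finite 0) with (Rbar_mult (h ^ 2) 0) by (simpl; f_equal; ring).
    apply is_lim_seq_scal_l; auto. }
  assert (HL2 := is_lim_seq_continuous sqrt _ 0 (continuity_pt_sqrt 0 (Rle_refl 0)) HL1).
  rewrite sqrt_0 in HL2.
  eapply is_lim_seq_ext; [|exact HL2]. intros m. reflexivity.
Qed.
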